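(* Let $d \ge 1$, let $r^{(1)},\dots,r^{(\rho)} \in (0,1)^d$ be pairwise incomparable points such that for each $j$ the values $r^{(i)}_j$ are distinct, let $S$ be their record-setting region and $G$ its set of generators. Let $r \in S \cap (0,1)^d$ be such that, for each $j \in [d]$, $r_j \ne r^{(i)}_j$ for all $i \in [\rho]$. Let $S' := S \setminus O^-_r = \{x \in S : x \not\prec r\}$. Define $\Sigma := \{g \in G : g \not\prec r\}$, $N := G \setminus \Sigma = \{g \in G: g \prec r\}$, $\widehat N := \{ y \vee (r_k e^{(k)}) : y \in N, k \in [d]\}$, and let $N'$ be the set of minimal elements of $\widehat N$ with respect to $\le$. Then $\Sigma \cap N' = \emptyset$ and the set of minimal elements of $S'$ with respect to $\le$ is exactly $\Sigma \cup N'$.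
   Context: For $x,y \in \mathbb{R}^d$, $x \prec y$ means $x_j < y_j$ for all $j$, and $x \le y$ means $x_j \le y_j$ for all $j$. The record-setting region of points $r^{(1)},\dots,r^{(\rho)}$ is $S := \{x \in [0,1)^d : x \not\prec r^{(i)} \text{ for all } i\}$; its generators are its minimal elements with respect to $\le$. $O^-_r := \{y \in [0,1)^d : y \prec r\}$. $x \vee y$ denotes the coordinatewise maximum, and $e^{(k)}$ is the $k$-th standard basis vector of $\mathbb{R}^d$. *)

(* Defs.v *)
(* points of R^d are functions 'I_d -> R over an arbitrary
   real field R (the statement is purely order-theoretic). *)
From HB Require Import structures.
From mathcomp Require Import all_boot all_order all_algebra.
Set Implicit Arguments. Unset Strict Implicit. Unset Printing Implicit Defensive.
Import Order.TTheory GRing.Theory Num.Theory.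
Local Open Scope ring_scope.

Section Defs.
Variables (R : realFieldType) (d : nat).

Definition vec := 'I_d -> R.

Definition sprec (x y : vec) : Prop := forall j, x j < y j.
Definition vle (x y : vec) : Prop := forall j, x j <= y j.

Definition in_cube (x : vec) : Prop := forall j, 0 <= x j /\ x j < 1.
Definition in_open_cube (x : vec) : Prop := forall j, 0 < x j /\ x j < 1.

Definition record_region (rho : nat) (pts : 'I_rho -> vec) (x : vec) : Prop :=
  in_cube x /\ forall i, ~ sprec x (pts i).

Definition minimal (A : vec -> Prop) (x : vec) : Prop :=
  A x /\ forall y, A y -> vle y x -> y = x.

Definition generators (rho : nat) (pts : 'I_rho -> vec) : vec -> Prop :=
  minimal (record_region pts).

Definition Ominus (r : vec) (y : vec) : Prop := in_cube y /\ sprec y r.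

Definition vjoin (x y : vec) : vec := fun j => Num.max (x j) (y j).

Definition scaled_basis (c : R) (k : 'I_d) : vec :=
  fun j => if j == k then c else 0.

End Defs.

(* Main.v *)
Require Import Defs.
From HB Require Import structures.
From mathcomp Require Import all_boot all_order all_algebra.
From Stdlib Require Import Classical FunctionalExtensionality.
Import Order.TTheory GRing.Theory Num.Theory.
Local Open Scope ring_scope.

Section Aux.
Variable R : realFieldType.

Definition cmax (a : R) (s : seq R) : R :=
  foldr (fun x acc => if x <= a then Num.max x acc else acc) 0 s.

Lemma cmax_ge0 a s : 0 <= cmax a s.
Proof.
elim: s => [|x s IH] //=; case: ifP => // _.
by rewrite le_max IH orbT.
Qed.

Lemma cmax_le a s : 0 <= a -> cmax a s <= a.
Proof.
move=> ha; elim: s => [|x s IH] //=; case: ifP => // hx.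
by rewrite ge_max hx IH.
Qed.

Lemma cmax_mem a s : cmax a s = 0 \/ cmax a s \in s.
Proof.
elim: s => [|x s IH] /=; first by left.
case: ifP => _.
  case: (leP x (cmax a s)) => _.
    case: IH => [->|h]; [by left|by right; rewrite in_cons h orbT].
  by right; rewrite in_cons eqxx.
case: IH => [->|h]; [by left|by right; rewrite in_cons h orbT].
Qed.

Lemma cmax_ub a s x : x \in s -> x <= a -> x <= cmax a s.
Proof.
elim: s => [|y s IH] //=; rewrite in_cons => /orP [/eqP <-|hs] hx.
  by rewrite hx le_max lexx.
case: ifP => _; last exact: IH.
by rewrite le_max IH ?orbT.
Qed.

Variables (d rho : nat) (pts : 'I_rho -> vec R d).

Definition canon (y : vec R d) : vec R d :=
  fun j => cmax (y j) [seq pts i j | i <- enum 'I_rho].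

Lemma not_sprec (x y : vec R d) : ~ sprec x y -> exists j, y j <= x j.
Proof.
move=> h; apply: NNPP => hn; apply: h => j.
rewrite ltNge; apply/negP => hj; apply: hn; by exists j.
Qed.

Lemma canon_prop y : record_region pts y ->
  [/\ record_region pts (canon y), vle (canon y) y &
      forall j, canon y j = 0 \/ exists i, canon y j = pts i j].
Proof.
move=> [hc hS]; split.
- split.
  + move=> j; split; first exact: cmax_ge0.
    exact: le_lt_trans (cmax_le _ _ (proj1 (hc j))) (proj2 (hc j)).
  + move=> i hi.
    case: (not_sprec _ _ (hS i)) => k hk.
    have : pts i k <= canon y k.
      apply: cmax_ub => //; apply: map_f; exact: mem_enum.
    by rewrite leNgt (hi k).
- move=> j; apply: cmax_le; exact: (proj1 (hc j)).
- move=> j; case: (cmax_mem (y j) [seq pts i j | i <- enum 'I_rho]) => h.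
    by left.
  by right; case/mapP: h => i _ e; exists i; rewrite /canon e.
Qed.

Lemma vle_trans (x y z : vec R d) : vle x y -> vle y z -> vle x z.
Proof. by move=> h1 h2 j; apply: le_trans (h1 j) (h2 j). Qed.

Lemma vle_anti (x y : vec R d) : vle x y -> vle y x -> x = y.
Proof.
move=> h1 h2; apply: functional_extensionality => j.
by apply: le_anti; rewrite h1 h2.
Qed.

Definition mu (y : vec R d) :=
  #|[pred ij : 'I_rho * 'I_d | pts ij.1 ij.2 <= y ij.2]|.

Lemma gen_below_n n y : (mu y < n)%N -> record_region pts y ->
  exists g, generators pts g /\ vle g y.
Proof.
elim: n y => [|n IH] y //= hmu hy.
case: (canon_prop _ hy) => hcS hcle hcc.
case: (classic (generators pts (canon y))) => hg.
  by exists (canon y).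
have [z [hzS hzle hzne]] : exists z, [/\ record_region pts z, vle z (canon y) & z <> canon y].
  apply: NNPP => hn; apply: hg; split => // z hz hzl.
  apply: NNPP => hne; apply: hn; by exists z.
have [j hj] : exists j, z j < canon y j.
  apply: NNPP => hn; apply: hzne; apply: vle_anti _ _ _ => // k.
  rewrite leNgt; apply/negP => hk; apply: hn; exists k.
  by rewrite lt_neqAle hzle andbT; apply/negP => /eqP e; move: hk; rewrite e ltxx.
have hmu' : (mu z < mu (canon y))%N.
  apply: proper_card; apply/properP; split.
    apply/subsetP => [[i k]] /=; rewrite !inE /= => h; exact: le_trans h (hzle k).
  case: (hcc j) => [e|[i e]].
    by move: hj; rewrite e ltNge (proj1 ((proj1 hzS) j)).
  exists (i, j); rewrite !inE /= -e ?lexx //.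
  by rewrite -ltNge.
have hmuc : (mu (canon y) <= mu y)%N.
  apply: subset_leq_card; apply/subsetP => [[i k]] /=; rewrite !inE /= => h.
  exact: le_trans h (hcle k).
have := IH z _ hzS; case.
  by apply: leq_trans hmu' _; apply: leq_trans hmuc _.
move=> g [hg1 hg2]; exists g; split => //.
exact: vle_trans _ _ _ hg2 (vle_trans _ _ _ hzle hcle).
Qed.

Lemma gen_below y : record_region pts y -> exists g, generators pts g /\ vle g y.
Proof. exact: (@gen_below_n (mu y).+1). Qed.

Lemma gen_coord h : generators pts h -> forall k, h k = 0 \/ exists i, h k = pts i k.
Proof.
move=> [hS hmin] k; case: (canon_prop _ hS) => hcS hcle hcc.
by rewrite -(hmin _ hcS hcle).
Qed.

Lemma inS_up (g z : vec R d) : record_region pts g -> vle g z -> in_cube z ->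
  record_region pts z.
Proof.
move=> [_ hg] hle hz; split => // i hi; apply: (hg i) => j.
exact: le_lt_trans (hle j) (hi j).
Qed.

End Aux.

Theorem mainTheorem6 (R : realFieldType) (d rho : nat)
    (pts : 'I_rho -> vec R d) (r : vec R d) :
  (1 <= d)%N ->
  (forall i, in_open_cube (pts i)) ->
  (forall i i', i != i' -> ~ vle (pts i) (pts i')) ->
  (forall (j : 'I_d) i i', i != i' -> pts i j != pts i' j) ->
  record_region pts r ->
  in_open_cube r ->
  (forall (j : 'I_d) i, r j != pts i j) ->
  let S' := fun x => record_region pts x /\ ~ Ominus r x in
  let Sigma := fun g => generators pts g /\ ~ sprec g r in
  let N := fun g => generators pts g /\ sprec g r in
  let Nhat := fun z => exists y k, N y /\ z = vjoin y (scaled_basis (r k) k) in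
  let N' := minimal Nhat in
  (forall x, ~ (Sigma x /\ N' x)) /\
  (forall x, minimal S' x <-> (Sigma x \/ N' x)).
Proof.
move=> hd hpts hinc hdist hrS hr hrne; cbv zeta.
have jk : forall (y : vec R d) k, sprec y r -> vjoin y (scaled_basis (r k) k) k = r k.
  move=> y k hy; rewrite /vjoin /scaled_basis eqxx max_r //; exact: ltW (hy k).
have jj : forall (y : vec R d) k j, in_cube y -> j != k ->
    vjoin y (scaled_basis (r k) k) j = y j.
  move=> y k j hy hj; rewrite /vjoin /scaled_basis (negbTE hj) max_l //.
  exact: proj1 (hy j).
have jle : forall (y : vec R d) k, in_cube y -> sprec y r -> vle y (vjoin y (scaled_basis (r k) k)).
  move=> y k hc hy j; case: (eqVneq j k) => [->|hj]; first by rewrite jk // ltW.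
  by rewrite jj.
have jS : forall (y : vec R d) k, generators pts y -> sprec y r ->
    record_region pts (vjoin y (scaled_basis (r k) k)) /\
    ~ Ominus r (vjoin y (scaled_basis (r k) k)).
  move=> y k [[hyc hyS] _] hy; split.
    apply: (@inS_up _ _ _ pts y); first by split.
      exact: jle.
    move=> j; case: (eqVneq j k) => [->|hj]; first by rewrite jk //; split; [exact: ltW (proj1 (hr k))| exact: proj2 (hr k)].
    by rewrite jj.
  by move=> [_ h]; move: (h k); rewrite jk // ltxx.
have jleX : forall (y x : vec R d) k, in_cube x -> vle y x -> r k <= x k ->
    vle (vjoin y (scaled_basis (r k) k)) x.
  move=> y x k hx hyx hk j; rewrite /vjoin /scaled_basis ge_max hyx /=.
  case: (eqVneq j k) => [->|_] //.
  exact: proj1 (hx j).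
have nOm : forall x : vec R d, ~ Ominus r x -> in_cube x -> ~ sprec x r.
  by move=> x h hc hs; apply: h.
have Om : forall x : vec R d, ~ sprec x r -> ~ Ominus r x.
  by move=> x h [_ hs].
split.
  move=> x [[[xS xmin] xnr] [[y [k [[[yS ymin] ylt] exy]]] _]].
  have := xmin y yS; rewrite exy => /(_ (jle _ _ (proj1 yS) ylt)) e.
  by move: (ylt k); rewrite {1}e jk // ltxx.
move=> x; split.
  move=> [[xS xnO] xmin].
  have xnr := nOm _ xnO (proj1 xS).
  case: (@gen_below _ _ _ pts _ xS) => g [gG gle].
  case: (classic (sprec g r)) => glt; last first.
    left; have e := xmin g (conj (proj1 gG) (Om _ glt)) gle.
    by rewrite -e; split.
  right; case: (@not_sprec _ _ _ _ xnr) => k hk.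
  have zle := jleX g x k (proj1 xS) gle hk.
  have e := xmin _ (jS g k gG glt) zle.
  split; first by exists g, k; rewrite e.
  move=> w [h [m [[hG hlt] ->]]] wle.
  exact: xmin _ (jS h m hG hlt) wle.
case=> [[xG xnr]|[[g [k [[gG glt] ->]]] xmin]].
  split; first by split; [exact: proj1 xG | exact: Om].
  by move=> y [yS _] yle; exact: (proj2 xG) y yS yle.
split; first exact: jS.
move=> y [yS ynO] yle.
have ync := nOm _ ynO (proj1 yS).
have gc := proj1 (proj1 gG).
have xm : forall (z : vec R d) m, vle z (vjoin g (scaled_basis (r k) k)) ->
    r m <= z m -> m = k.
  move=> z m hz hm; apply/eqP; apply: contraT => hmk.
  move: (hz m); rewrite jj // => hzm.
  by move: (lt_le_trans (le_lt_trans hzm (glt m)) hm); rewrite ltxx.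
case: (@gen_below _ _ _ pts _ yS) => h [hG hle].
have hx := @vle_trans _ _ _ _ _ hle yle.
have hlt : sprec h r.
  apply: NNPP => hn; case: (@not_sprec _ _ _ _ hn) => m hm.
  have emk := xm _ _ hx hm; subst m.
  have e : h k = r k.
    by apply: le_anti; rewrite hm andbT; move: (hx k); rewrite jk.
  case: (@gen_coord _ _ _ pts h hG k) => [h0|[i hi]].
    by move: (proj1 (hr k)); rewrite -e h0 ltxx.
  by move: (hrne k i); rewrite -e hi eqxx.
case: (@not_sprec _ _ _ _ ync) => m hm.
have emk := xm _ _ yle hm; subst m.
have wle := jleX h y k (proj1 yS) hle hm.
have e := xmin _ (ex_intro _ h (ex_intro _ k (conj (conj hG hlt) erefl))) (@vle_trans _ _ _ _ _ wle yle).
rewrite -e in yle *.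
exact: @vle_anti _ _ _ _ yle wle.
Qed.
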